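(* Let $n\ge 6$ be even, let $\alpha>n-3$, and let $f$ be a function on $(0,\infty)$ supported in $[0,\lambda_1]$ for some $0<\lambda_1\lesssim1$, which is $\frac n2-1$ times differentiable with $|f^{(j)}(\lambda)|\lesssim\lambda^{\alpha-j}$ for $0<\lambda$ and $0\le j\le\frac n2-1$. Then for $t\neq0$, $$\bigg|\int_0^\infty e^{it\lambda^2}f(\lambda)\,d\lambda\bigg|\lesssim|t|^{1-\frac n2}.$$
   Context: The hypothesis on $f$ is what the paper denotes $f(\lambda)=\widetilde O_{\frac n2-1}(\lambda^\alpha)$: the $j$-th derivative of $f$ is $O(\lambda^{\alpha-j})$ for each $j\le\frac n2-1$. *)

(* Defs.v *)
From Stdlib Require Import Reals.
From Coquelicot Require Import Coquelicot.
Open Scope R_scope.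

Definition eix (x : R) : C := (cos x, sin x).

(* The oscillatory integral  int_0^infty e^{i t lam^2} f(lam) dlam,
   for f supported in [0, lam1]: it reduces to the integral over [0, lam1]. *)
Definition osc_int (t lam1 : R) (f : R -> C) : C :=
  @RInt C_R_CompleteNormedModule (fun lam => Cmult (eix (t * lam ^ 2)) (f lam)) 0 lam1.

Definition tildeO_hyp (m : nat) (alpha K : R) (f : R -> C) : Prop :=
  exists g : nat -> R -> C,
    (forall lam, g 0%nat lam = f lam) /\
    (forall (j : nat) lam, (j < m)%nat -> 0 < lam ->
       @is_derive R_AbsRing C_R_NormedModule (g j) lam (g (S j) lam)) /\
    (forall (j : nat) lam, (j <= m)%nat -> 0 < lam ->
       Cmod (g j lam) <= K * Rpower lam (alpha - INR j)).

(* Main.v *)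
Require Import Defs.
From Stdlib Require Import Reals Arith.
From Coquelicot Require Import Coquelicot.
From Stdlib Require Import Lra Lia FunctionalExtensionality.
Open Scope R_scope.

Fixpoint Sc (k : nat) (b C : R) (g : R -> R) : Prop :=
  (forall x, 0 < x -> Rabs (g x) <= C * Rpower x b) /\
  match k with
  | O => True
  | S k' => exists g', (forall x, 0 < x -> is_derive g x (g' x)) /\ Sc k' (b - 1) C g'
  end.

Lemma Rpower_pos x y : 0 < Rpower x y.
Proof. unfold Rpower; apply exp_pos. Qed.

Lemma Sc_C k b C g : Sc k b C g -> 0 <= C.
Proof.
  intros H. destruct k; destruct H as [H _]; specialize (H 1 Rlt_0_1);
  pose proof (Rpower_pos 1 b); pose proof (Rabs_pos (g 1));
  destruct (Rle_or_lt 0 C); auto; nra.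
Qed.

Lemma Sc_weak k : forall b C g, Sc (S k) b C g -> Sc k b C g.
Proof.
  induction k; intros b C g [H1 [g' [H2 H3]]].
  - split; auto.
  - split; auto. exists g'; split; auto.
Qed.

Lemma Sc_mono k : forall b C C' g, C <= C' -> Sc k b C g -> Sc k b C' g.
Proof.
  induction k; intros b C C' g HC [H1 H2]; split.
  - intros x hx; specialize (H1 x hx); pose proof (Rpower_pos x b); nra.
  - auto.
  - intros x hx; specialize (H1 x hx); pose proof (Rpower_pos x b); nra.
  - destruct H2 as [g' [H2 H3]]; exists g'; split; eauto.
Qed.

Lemma Sc_plus k : forall b C1 C2 g1 g2, Sc k b C1 g1 -> Sc k b C2 g2 ->
  Sc k b (C1 + C2) (fun x => g1 x + g2 x).
Proof.
  induction k; intros b C1 C2 g1 g2 [H1 H2] [K1 K2]; split.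
  - intros x hx; specialize (H1 x hx); specialize (K1 x hx).
    pose proof (Rabs_triang (g1 x) (g2 x)); nra.
  - auto.
  - intros x hx; specialize (H1 x hx); specialize (K1 x hx).
    pose proof (Rabs_triang (g1 x) (g2 x)); nra.
  - destruct H2 as [g' [H2 H3]]; destruct K2 as [h' [K2 K3]].
    exists (fun x => g' x + h' x); split; auto.
    intros x hx; apply (is_derive_plus g1 g2); auto.
Qed.

Lemma Sc_scal k : forall b C c g, Sc k b C g ->
  Sc k b (Rabs c * C) (fun x => c * g x).
Proof.
  induction k; intros b C c g [H1 H2]; split.
  - intros x hx; specialize (H1 x hx); rewrite Rabs_mult.
    pose proof (Rabs_pos c). rewrite Rmult_assoc. apply Rmult_le_compat_l; auto.
  - auto.
  - intros x hx; specialize (H1 x hx); rewrite Rabs_mult.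
    pose proof (Rabs_pos c). rewrite Rmult_assoc. apply Rmult_le_compat_l; auto.
  - destruct H2 as [g' [H2 H3]].
    exists (fun x => c * g' x); split; auto.
    intros x hx. apply (is_derive_scal g x c (g' x)); auto.
Qed.

Fixpoint A (k : nat) : R := match k with O => 1 | S k => A k + A k * A k + 1 end.

Lemma A_ge1 k : 1 <= A k.
Proof. induction k; simpl; nra. Qed.

Lemma Rpower_m1 x b : 0 < x -> Rpower x (b - 1) = Rpower x b / x.
Proof.
  intros hx. unfold Rminus. rewrite Rpower_plus, Rpower_Ropp, Rpower_1; auto.
Qed.

Lemma Sc_inv k : forall b C g, Sc k b C g -> Sc k (b - 1) (A k * C) (fun x => g x / x).
Proof.
  induction k; intros b C g HS.
  - pose proof (Sc_C _ _ _ _ HS). destruct HS as [H1 _]; split; auto.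
    intros x hx; simpl. rewrite Rpower_m1 by auto. unfold Rdiv.
    rewrite Rabs_mult, Rabs_inv, (Rabs_pos_eq x) by lra.
    specialize (H1 x hx). rewrite Rmult_1_l, <- Rmult_assoc.
    apply Rmult_le_compat_r; auto. left; apply Rinv_0_lt_compat; auto.
  - pose proof (Sc_C _ _ _ _ HS) as HC. pose proof (A_ge1 k) as HA.
    pose proof (Sc_weak _ _ _ _ HS) as HW.
    destruct HS as [H1 [g' [H2 H3]]]; split.
    + intros x hx. rewrite Rpower_m1 by auto. unfold Rdiv.
      rewrite Rabs_mult, Rabs_inv, (Rabs_pos_eq x) by lra.
      specialize (H1 x hx). pose proof (Rpower_pos x b).
      pose proof (Rinv_0_lt_compat x hx).
      rewrite <- Rmult_assoc. apply Rmult_le_compat_r; [lra|]. simpl.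
      assert (0 <= C * Rpower x b) by nra. set (P := C * Rpower x b) in *.
      rewrite Rmult_assoc. fold P. nra.
    + exists (fun x => g' x / x + (-1) * ((g x / x) / x)). split.
      * intros x hx. 
        eapply is_derive_ext with (f := fun t => g t / t).
        { intros; reflexivity. }
        replace (g' x / x + -1 * (g x / x / x)) with ((g' x * x - g x * 1) / x ^ 2)
          by (field; lra).
        apply is_derive_div; auto. apply (is_derive_id x). lra.
      * pose proof (IHk _ _ _ H3) as P1.
        pose proof (IHk _ _ _ (IHk _ _ _ HW)) as P2.
        pose proof (Sc_scal _ _ _ (-1) _ P2) as P3.
        pose proof (Sc_plus _ _ _ _ _ _ P1 P3) as P4.
        eapply Sc_mono; [|exact P4].
        replace (Rabs (-1)) with 1 by (unfold Rabs; destruct Rcase_abs; lra).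
        simpl. nra.
Qed.

Fixpoint B (k : nat) : R := match k with O => 1 | S k => B k * A k end.

Lemma Sc_Dchain k : forall b C g, Sc k b C g -> exists H : nat -> R -> R,
  (forall x, 0 < x -> H 0%nat x = g x) /\
  (forall j x, (j < k)%nat -> 0 < x -> is_derive (H j) x (2 * x * H (S j) x)) /\
  (forall x, 0 < x -> Rabs (H k x) <= B k * C * Rpower x (b - 2 * INR k)).
Proof.
  induction k; intros b C g HS.
  - exists (fun _ => g). split; [auto|split].
    + intros; lia.
    + intros x hx. destruct HS as [H1 _]. simpl. rewrite Rmult_0_r, Rminus_0_r, Rmult_1_l. auto.
  - pose proof (Sc_C _ _ _ _ HS) as HC.
    destruct HS as [H1 [g' [H2 H3]]].
    pose proof (Sc_scal _ _ _ (/2) _ (Sc_inv _ _ _ _ H3)) as H4.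
    assert (H5 : Sc k (b - 1 - 1) (A k * C) (fun x => /2 * (g' x / x))).
    { eapply Sc_mono; [|exact H4]. rewrite Rabs_pos_eq by lra.
      pose proof (A_ge1 k). nra. }
    destruct (IHk _ _ _ H5) as [H' [E0 [ED EB]]].
    exists (fun j => match j with O => g | S j => H' j end). split; [auto|split].
    + intros j x hj hx. destruct j.
      * simpl. rewrite E0 by auto.
        assert (E : forall y : R, 2 * x * (/ 2 * (y / x)) = y) by (intros; field; lra).
        rewrite E. auto.
      * apply ED; auto. lia.
    + intros x hx. specialize (EB x hx).
      replace (b - 2 * INR (S k)) with (b - 1 - 1 - 2 * INR k) by (rewrite S_INR; ring).
      simpl. replace (B k * A k * C) with (B k * (A k * C)) by ring. exact EB.
Qed.


Definition Dl (d : R) (G : R -> R) : R -> R := fun u => G u - G (u + d).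
Fixpoint dm (k : nat) (d : R) (G : R -> R) : R -> R :=
  match k with O => G | S k => dm k d (Dl d G) end.

Lemma is_derive_shift (G G' : R -> R) d v :
  is_derive G (v + d) (G' (v + d)) -> is_derive (fun w => G (w + d)) v (G' (v + d)).
Proof.
  intros H.
  assert (Hs : is_derive (fun w : R => w + d) v 1).
  { auto_derive; auto; ring. }
  pose proof (is_derive_comp G (fun w => w + d) v _ _ H Hs) as P.
  unfold scal in P; simpl in P; unfold mult in P; simpl in P.
  rewrite Rmult_1_l in P. exact P.
Qed.

Lemma derive_cont (G : R -> R) v l : is_derive G v l -> continuity_pt G v.
Proof.
  intros H. apply continuity_pt_filterlim.
  apply (ex_derive_continuous (K := R_AbsRing) (V := R_NormedModule) G v). exists l; auto.
Qed.

Lemma dm_mvt m : forall (Gs : nat -> R -> R) d u, 0 < d -> 0 < u ->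
  (forall j v, (j < m)%nat -> 0 < v -> is_derive (Gs j) v (Gs (S j) v)) ->
  exists xi, u <= xi <= u + INR m * d /\ dm m d (Gs 0%nat) u = (- d) ^ m * Gs m xi.
Proof.
  induction m; intros Gs d u hd hu HD.
  - exists u; split; [simpl; lra|]. simpl; ring.
  - set (Gs' := fun j => Dl d (Gs j)).
    assert (HD' : forall j v, (j < m)%nat -> 0 < v -> is_derive (Gs' j) v (Gs' (S j) v)).
    { intros j v hj hv. unfold Gs', Dl.
      apply (is_derive_minus (Gs j) (fun w => Gs j (w + d))).
      - apply HD; auto; lia.
      - apply is_derive_shift. apply HD; [lia|lra]. }
    destruct (IHm Gs' d u hd hu HD') as [xi [Hxi E]].
    assert (Hc : forall x, xi <= x <= xi + d -> is_derive (Gs m) x (Gs (S m) x)).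
    { intros x hx. apply HD; [lia|]. pose proof (pos_INR m). nra. }
    destruct (MVT_gen (Gs m) xi (xi + d) (Gs (S m))) as [c [Hc1 Hc2]].
    + intros x hx. rewrite Rmin_left, Rmax_right in hx by lra. apply Hc; lra.
    + intros x hx. rewrite Rmin_left, Rmax_right in hx by lra. eapply derive_cont, Hc; lra.
    + rewrite Rmin_left, Rmax_right in Hc1 by lra.
      exists c. split.
      * rewrite S_INR. pose proof (pos_INR m). nra.
      * simpl. change (dm m d (Gs' 0%nat) u = - d * (- d) ^ m * Gs (S m) c).
        rewrite E. unfold Gs', Dl.
        replace (Gs m xi - Gs m (xi + d)) with (- (Gs m (xi + d) - Gs m xi)) by ring.
        rewrite Hc2. ring.
Qed.

Lemma dm_ext m : forall d (F G : R -> R) u, 0 <= d ->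
  (forall v, u <= v -> F v = G v) -> dm m d F u = dm m d G u.
Proof.
  induction m; intros d F G u hd H; simpl.
  - apply H; lra.
  - apply IHm; auto. intros v hv. unfold Dl. rewrite !H by lra. auto.
Qed.

Lemma dm_crude m : forall d (F : R -> R) u M, 0 <= d ->
  (forall v, v <= u + INR m * d -> Rabs (F v) <= M) -> Rabs (dm m d F u) <= 2 ^ m * M.
Proof.
  induction m; intros d F u M hd H; simpl.
  - rewrite Rmult_1_l. apply H. replace (INR 0) with 0 by reflexivity. lra.
  - replace (2 * 2 ^ m * M) with (2 ^ m * (2 * M)) by ring. apply IHm; auto. intros v hv. unfold Dl.
    rewrite S_INR in H.
    pose proof (Rabs_triang (F v) (- F (v + d))). rewrite Rabs_Ropp in H0.
    assert (h1 : v <= u + (INR m + 1) * d) by lra.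
    assert (h2 : v + d <= u + (INR m + 1) * d) by lra.
    pose proof (H v h1). pose proof (H (v + d) h2).
    unfold Rminus. lra.
Qed.

Lemma dm_zero_right m : forall d (F : R -> R) L, 0 <= d ->
  (forall v, L < v -> F v = 0) -> forall v, L < v -> dm m d F v = 0.
Proof.
  induction m; intros d F L hd H; simpl; auto.
  apply IHm; auto. intros v hv; unfold Dl. rewrite !H by lra. ring.
Qed.

Lemma dm_cont m : forall d (F : R -> R), (forall v, continuous F v) ->
  forall v, continuous (dm m d F) v.
Proof.
  induction m; intros d F H; simpl; auto.
  apply IHm. intros v. unfold Dl. apply (continuous_minus F (fun w => F (w + d))); auto.
  apply (continuous_comp (fun w => w + d) F). 
  - apply (continuous_plus (fun w => w) (fun _ => d)); [apply continuous_id|apply continuous_const].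
  - auto.
Qed.


Lemma cont_comp_lin (psi : R -> R) t : (forall x, continuous psi x) ->
  forall u, continuous (fun u => psi (t * u)) u.
Proof.
  intros H u. apply (continuous_comp (fun u => t * u) psi); auto.
  apply (continuous_mult (fun _ => t) (fun u => u)); [apply continuous_const|apply continuous_id].
Qed.

Lemma cont_prod (f g : R -> R) u : continuous f u -> continuous g u ->
  continuous (fun u => f u * g u) u.
Proof. intros; apply (continuous_mult f g); auto. Qed.

Lemma RInt_zero_ext (f : R -> R) a b : (forall x, Rmin a b < x < Rmax a b -> f x = 0) ->
  RInt f a b = 0.
Proof.
  intros H. rewrite (RInt_ext f (fun _ => 0)) by auto. rewrite RInt_const.
  unfold scal; simpl; unfold mult; simpl. ring.
Qed.

Lemma exRc (f : R -> R) a b : (forall z, continuous f z) -> ex_RInt f a b.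
Proof. intros H. apply (ex_RInt_continuous (V := R_CompleteNormedModule)); auto. Qed.

Lemma RInt_neg (f : R -> R) a b : ex_RInt f a b -> RInt (fun x => - f x) a b = - RInt f a b.
Proof. intros H. exact (RInt_opp (V := R_CompleteNormedModule) f a b H). Qed.

Lemma shift1 (psi : R -> R) t d (G : R -> R) a b c L : 0 < d ->
  (forall w, psi (t * (w - d)) = - psi (t * w)) -> (forall x, continuous psi x) ->
  (forall v, continuous G v) -> (forall v, v < c -> G v = 0) -> (forall v, L < v -> G v = 0) ->
  a + d <= c -> L <= b ->
  RInt (fun u => psi (t * u) * G u) a b = / 2 * RInt (fun u => psi (t * u) * Dl d G u) a b.
Proof.
  intros hd Hpsi Hpc HGc HG1 HG2 hac hLb.
  set (P := fun u => psi (t * u) * G u).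
  assert (HPc : forall u, continuous P u).
  { intros u; apply cont_prod; auto. apply cont_comp_lin; auto. }
  assert (HPi : forall x y, ex_RInt P x y).
  { intros; apply exRc; auto. }
  set (Q := fun u => psi (t * u) * G (u + d)).
  assert (HQc : forall u, continuous Q u).
  { intros u; apply cont_prod; [apply cont_comp_lin; auto|].
    apply (continuous_comp (fun w => w + d) G); auto.
    apply (continuous_plus (fun w => w) (fun _ => d)); [apply continuous_id|apply continuous_const]. }
  assert (E1 : RInt (fun u => psi (t * u) * Dl d G u) a b = RInt P a b - RInt Q a b).
  { rewrite <- (RInt_minus P Q) by (apply exRc; auto).
    apply RInt_ext. intros; unfold P, Q, Dl, minus, plus, opp; simpl. ring. }
  set (f := fun w => psi (t * (w - d)) * G w).
  assert (E2 : RInt Q a b = RInt f (1 * a + d) (1 * b + d)).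
  { rewrite <- RInt_comp_lin.
    - apply RInt_ext. intros x _. unfold Q, f, scal; simpl; unfold mult; simpl.
      replace (1 * x + d - d) with x by ring. replace (1 * x + d) with (x + d) by ring. ring.
    - apply exRc. intros z. unfold f. apply cont_prod; auto.
      apply (continuous_comp (fun w => t * (w - d)) psi); auto.
      apply (continuous_mult (fun _ => t) (fun w => w - d)); [apply continuous_const|].
      apply (continuous_minus (fun w => w) (fun _ => d)); [apply continuous_id|apply continuous_const]. }
  assert (E3 : RInt f (1 * a + d) (1 * b + d) = - RInt P (a + d) (b + d)).
  { rewrite (RInt_ext f (fun w => - (P w))).
    - rewrite RInt_neg by auto. replace (1 * a + d) with (a + d) by ring.
      replace (1 * b + d) with (b + d) by ring. reflexivity.
    - intros x _. unfold f, P. rewrite Hpsi. rewrite <- Ropp_mult_distr_l. reflexivity. }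
  assert (E4 : RInt P (a + d) (b + d) = RInt P a b).
  { pose proof (RInt_Chasles P a (a + d) (b + d) (HPi _ _) (HPi _ _)) as C1.
    pose proof (RInt_Chasles P a b (b + d) (HPi _ _) (HPi _ _)) as C2.
    unfold plus in C1, C2; simpl in C1, C2.
    rewrite (RInt_zero_ext P a (a + d)) in C1.
    rewrite (RInt_zero_ext P b (b + d)) in C2. lra.
    - intros x hx. rewrite Rmin_left, Rmax_right in hx by lra. unfold P. rewrite HG2 by lra. ring.
    - intros x hx. rewrite Rmin_left, Rmax_right in hx by lra. unfold P. rewrite HG1 by lra. ring. }
  rewrite E1, E2, E3, E4. fold P. lra.
Qed.

Lemma shiftm (psi : R -> R) t d a b L m : 0 < d ->
  (forall w, psi (t * (w - d)) = - psi (t * w)) -> (forall x, continuous psi x) -> L <= b ->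
  forall (G : R -> R) c,
  (forall v, continuous G v) -> (forall v, v < c -> G v = 0) -> (forall v, L < v -> G v = 0) ->
  a + INR m * d <= c ->
  RInt (fun u => psi (t * u) * G u) a b = (/ 2) ^ m * RInt (fun u => psi (t * u) * dm m d G u) a b.
Proof.
  intros hd Hpsi Hpc hLb. induction m; intros G c HGc HG1 HG2 hac.
  - simpl. symmetry. apply Rmult_1_l.
  - rewrite S_INR in hac. pose proof (pos_INR m).
    rewrite (shift1 psi t d G a b c L) by (auto; nra).
    rewrite (IHm (Dl d G) (c - d)).
    + simpl. symmetry. apply Rmult_assoc.
    + apply (dm_cont 1). auto.
    + intros v hv. unfold Dl. rewrite !HG1 by lra. ring.
    + intros v hv. unfold Dl. rewrite !HG2 by lra. ring.
    + lra.
Qed.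


Lemma Rpower_sqrt_e v x : 0 < v -> Rpower (sqrt v) x = Rpower v (x / 2).
Proof.
  intros hv. rewrite <- Rpower_sqrt by auto. rewrite Rpower_mult. f_equal. field.
Qed.

Lemma Rpower_1_base c : Rpower 1 c = 1.
Proof. unfold Rpower. rewrite ln_1, Rmult_0_r, exp_0. auto. Qed.

Lemma Rpower_le_1 d c : 0 < d <= 1 -> 0 <= c -> Rpower d c <= 1.
Proof.
  intros hd hc. rewrite <- (Rpower_1_base c). apply Rle_Rpower_l; auto.
Qed.

Lemma Rpower_neg_mono a b c : 0 < a <= b -> c <= 0 -> Rpower b c <= Rpower a c.
Proof.
  intros hab hc.
  assert (E : forall x, Rpower x c = / Rpower x (- c))
    by (intros; rewrite <- Rpower_Ropp, Ropp_involutive; auto).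
  rewrite !E. apply Rinv_le_contravar; [apply Rpower_pos|apply Rle_Rpower_l; lra].
Qed.

Lemma Rpower_le_x v e : 0 < v <= 1 -> 1 <= e -> Rpower v e <= v.
Proof.
  intros hv he. replace e with (1 + (e - 1)) by ring. rewrite Rpower_plus, Rpower_1 by lra.
  pose proof (Rpower_le_1 v (e - 1) hv ltac:(lra)). nra.
Qed.

Definition Fof (H0 : R -> R) (u : R) : R := if Rlt_dec 0 u then H0 (sqrt u) else 0.

Lemma Fof_cont (H0 : R -> R) C1 e :
  (forall y, 0 < y -> continuous H0 y) -> 1 <= e ->
  (forall v, 0 < v -> Rabs (H0 (sqrt v)) <= C1 * Rpower v e) ->
  forall v, continuous (Fof H0) v.
Proof.
  intros Hc he Hb v. destruct (Rtotal_order v 0) as [hv|[hv|hv]].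
  - apply (continuous_ext_loc _ (fun _ => 0)).
    + apply (locally_open (fun u => u < 0)); [apply open_lt| |auto].
      intros x hx. unfold Fof. destruct (Rlt_dec 0 x); auto; lra.
    + apply continuous_const.
  - subst v. apply continuity_pt_filterlim.
    intros eps heps. assert (HC1 : 0 <= C1).
    { specialize (Hb 1 Rlt_0_1). pose proof (Rpower_pos 1 e). pose proof (Rabs_pos (H0 (sqrt 1))). nra. }
    exists (Rmin 1 (eps / (C1 + 1))). split.
    { apply Rmin_pos; [lra|]. apply Rdiv_lt_0_compat; lra. }
    intros x [_ hx]. simpl in *. unfold R_dist in *. unfold Fof.
    destruct (Rlt_dec 0 0); [lra|]. rewrite !Rminus_0_r in *.
    destruct (Rlt_dec 0 x).
    + rewrite Rabs_pos_eq in hx by lra. pose proof (Rmin_l 1 (eps / (C1 + 1))).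
      pose proof (Rmin_r 1 (eps / (C1 + 1))).
      specialize (Hb x r). pose proof (Rpower_le_x x e ltac:(lra) he).
      assert (x * (C1 + 1) < eps).
      { apply (Rmult_lt_compat_r (C1 + 1)) in hx; [|lra].
        unfold Rdiv in *. 
        assert (eps / (C1 + 1) * (C1 + 1) = eps) by (field; lra). unfold Rdiv in H2. nra. }
      nra.
    + rewrite Rabs_R0. auto.
  - apply (continuous_ext_loc _ (fun u => H0 (sqrt u))).
    + apply (locally_open (fun u => 0 < u)); [apply open_gt| |auto].
      intros x hx. unfold Fof. destruct (Rlt_dec 0 x); auto; lra.
    + apply (continuous_comp sqrt H0). apply continuous_sqrt. apply Hc.
      apply sqrt_lt_R0; auto.
Qed.

Lemma Gs_deriv (H : nat -> R -> R) j v : 0 < v ->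
  is_derive (H j) (sqrt v) (2 * sqrt v * H (S j) (sqrt v)) ->
  is_derive (fun u => H j (sqrt u)) v (H (S j) (sqrt v)).
Proof.
  intros hv HD. pose proof (sqrt_lt_R0 v hv) as hs.
  assert (Hs : is_derive sqrt v (/ (2 * sqrt v))).
  { pose proof (is_derive_sqrt (fun x => x) v 1 (is_derive_id v) hv) as P.
    replace (/ (2 * sqrt v)) with (1 / (2 * sqrt v)) by (field; lra). exact P. }
  pose proof (is_derive_comp (H j) sqrt v _ _ HD Hs) as P.
  unfold scal in P; simpl in P; unfold mult in P; simpl in P.
  replace (/ (2 * sqrt v) * (2 * sqrt v * H (S j) (sqrt v))) with (H (S j) (sqrt v)) in P
    by (field; lra). exact P.
Qed.

Lemma subst_lemma (psi : R -> R) t (H0 phi : R -> R) lam1 : 0 < lam1 ->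
  (forall x, continuous psi x) -> (forall v, continuous (Fof H0) v) ->
  (forall x, 0 < x -> H0 x = / 2 * (phi x / x)) ->
  ex_RInt (fun x => psi (t * x ^ 2) * phi x) 0 lam1 /\
  RInt (fun x => psi (t * x ^ 2) * phi x) 0 lam1 =
  RInt (fun u => psi (t * u) * Fof H0 u) 0 (lam1 ^ 2).
Proof.
  intros hl Hpc HFc HH.
  set (f := fun u => psi (t * u) * Fof H0 u).
  assert (Hfc : forall u, continuous f u).
  { intros u; apply cont_prod; auto. apply cont_comp_lin; auto. }
  set (Phi := fun x => 2 * x * f (x ^ 2)).
  assert (HPc : forall x, continuous Phi x).
  { intros x. unfold Phi. apply cont_prod.
    - apply (continuous_mult (fun _ => 2) (fun x => x)); [apply continuous_const|apply continuous_id].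
    - apply (continuous_comp (fun x => x ^ 2) f); auto.
      apply (continuous_mult (fun x => x) (fun x => x ^ 1)); [apply continuous_id|].
      apply (continuous_mult (fun x => x) (fun x => 1)); [apply continuous_id|apply continuous_const]. }
  assert (Heq : forall x, Rmin 0 lam1 < x < Rmax 0 lam1 -> Phi x = psi (t * x ^ 2) * phi x).
  { intros x hx. rewrite Rmin_left, Rmax_right in hx by lra. unfold Phi, f, Fof.
    destruct (Rlt_dec 0 (x ^ 2)) as [h|h]; [|exfalso; apply h; nra].
    replace (sqrt (x ^ 2)) with x by (rewrite <- Rsqr_pow2, sqrt_Rsqr; lra).
    rewrite HH by lra. field. lra. }
  split.
  - apply (ex_RInt_ext Phi); auto. apply exRc; auto.
  - rewrite <- (RInt_ext Phi) by auto.
    transitivity (RInt f (0 ^ 2) (lam1 ^ 2)); [|f_equal; ring].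
    rewrite <- (RInt_comp (V := R_CompleteNormedModule) f (fun x => x ^ 2) (fun x => 2 * x)).
    + apply RInt_ext. intros x _. unfold Phi, scal; simpl; unfold mult; simpl. ring.
    + intros; auto.
    + intros x _. split.
      * auto_derive; auto. ring.
      * apply (continuous_mult (fun _ => 2) (fun x => x)); [apply continuous_const|apply continuous_id].
Qed.


Lemma part2 (P : R -> R) a b c g U : 0 < a <= b -> b <= U -> -1 < g -> 0 <= c ->
  (forall u, continuous P u) ->
  (forall u, a <= u <= b -> Rabs (P u) <= c * (Rpower u g + Rpower U g)) ->
  Rabs (RInt P a b) <= c * (Rpower U (g + 1) / (g + 1) + Rpower U g * U).
Proof.
  intros hab hbU hg hc HPc HPb.
  set (Psi := fun u => c * (/ (g + 1) * Rpower u (g + 1) + Rpower U g * u)).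
  set (gg := fun u => c * (Rpower u g + Rpower U g)).
  assert (HD : forall u, 0 < u -> is_derive Psi u (gg u)).
  { intros u hu. apply is_derive_Reals. unfold Psi, gg.
    replace (c * (Rpower u g + Rpower U g)) with
      (c * (/ (g + 1) * ((g + 1) * Rpower u (g + 1 - 1)) + Rpower U g * 1)).
    2:{ replace (g + 1 - 1) with g by ring. field. lra. }
    apply derivable_pt_lim_scal. apply derivable_pt_lim_plus.
    - apply derivable_pt_lim_scal. apply derivable_pt_lim_power; auto.
    - apply derivable_pt_lim_scal. apply derivable_pt_lim_id. }
  assert (HI : is_RInt gg a b (minus (Psi b) (Psi a))).
  { apply (is_RInt_derive (V := R_CompleteNormedModule)).
    - intros x hx. rewrite Rmin_left, Rmax_right in hx by lra. apply HD. lra.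
    - intros x hx. rewrite Rmin_left, Rmax_right in hx by lra. unfold gg.
      apply (continuous_mult (fun _ => c) (fun u => Rpower u g + Rpower U g)); [apply continuous_const|].
      apply (continuous_plus (fun u => Rpower u g) (fun _ => Rpower U g)); [|apply continuous_const].
      apply (ex_derive_continuous (K := R_AbsRing) (V := R_NormedModule)).
      exists (g * Rpower x (g - 1)). apply is_derive_Reals. apply derivable_pt_lim_power. lra. }
  assert (HP : is_RInt P a b (RInt P a b)).
  { apply (RInt_correct (V := R_CompleteNormedModule)). apply exRc; auto. }
  pose proof (norm_RInt_le (V := R_NormedModule) P gg a b _ _ ltac:(lra) HPb HP HI) as N.
  change (Rabs (RInt P a b) <= minus (Psi b) (Psi a)) in N.
  eapply Rle_trans; [exact N|]. unfold minus, plus, opp; simpl. unfold Psi.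
  pose proof (Rpower_pos a (g + 1)). pose proof (Rpower_pos U g).
  assert (Rpower b (g + 1) <= Rpower U (g + 1)) by (apply Rle_Rpower_l; lra).
  assert (0 < / (g + 1)) by (apply Rinv_0_lt_compat; lra).
  assert (E : Rpower U (g + 1) / (g + 1) = / (g + 1) * Rpower U (g + 1)) by (unfold Rdiv; ring).
  rewrite E.
  assert (X : / (g + 1) * Rpower b (g + 1) + Rpower U g * b - (/ (g + 1) * Rpower a (g + 1) + Rpower U g * a)
     <= / (g + 1) * Rpower U (g + 1) + Rpower U g * U) by nra.
  apply Rmult_le_compat_l with (r := c) in X; auto. lra.
Qed.

Lemma bound_D (psi F : R -> R) (Gs : nat -> R -> R) t m d L U0 C1 C2 e g :
  (1 <= m)%nat -> 0 < d <= 1 -> 0 < L <= U0 -> 0 <= e -> -1 < g -> 0 <= C1 -> 0 <= C2 ->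
  (forall x, continuous psi x) -> (forall x, Rabs (psi x) <= 1) ->
  (forall v, continuous F v) -> (forall v, v <= 0 -> F v = 0) -> (forall v, L < v -> F v = 0) ->
  (forall v, 0 < v -> Rabs (F v) <= C1 * Rpower v e) ->
  (forall j v, (j < m)%nat -> 0 < v -> is_derive (Gs j) v (Gs (S j) v)) ->
  (forall v, 0 < v -> Gs 0%nat v = F v) ->
  (forall v, 0 < v -> Rabs (Gs m v) <= C2 * Rpower v g) ->
  Rabs (RInt (fun u => psi (t * u) * dm m d F u) (- (INR m * d)) L) <=
    2 * INR m * d * (2 ^ m * (C1 * Rpower (2 * INR m * d) e)) +
    d ^ m * C2 * (Rpower (U0 + 2 * INR m) (g + 1) / (g + 1) + Rpower (U0 + 2 * INR m) g * (U0 + 2 * INR m)).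
Proof.
  intros hm hd hL he hg hC1 hC2 Hpc Hpb HFc HF0 HFL HFb HGd HG0 HGb.
  set (U := U0 + 2 * INR m).
  assert (hmr : 1 <= INR m) by (apply (le_INR 1); auto).
  set (P := fun u => psi (t * u) * dm m d F u).
  assert (HPc : forall u, continuous P u).
  { intros u; apply cont_prod; [apply cont_comp_lin; auto|]. apply dm_cont; auto. }
  assert (HPi : forall x y, ex_RInt P x y) by (intros; apply exRc; auto).
  set (M := Rmax L (INR m * d)).
  assert (hM1 : L <= M) by apply Rmax_l.
  assert (hM2 : INR m * d <= M) by apply Rmax_r.
  assert (hM3 : M <= U0 + INR m).
  { unfold M. apply Rmax_lub; nra. }
  assert (E1 : RInt P (- (INR m * d)) L = RInt P (- (INR m * d)) M).
  { pose proof (RInt_Chasles P (- (INR m * d)) L M (HPi _ _) (HPi _ _)) as C1'.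
    unfold plus in C1'; simpl in C1'.
    rewrite (RInt_zero_ext P L M) in C1'. lra.
    intros x hx. rewrite Rmin_left, Rmax_right in hx by lra. unfold P.
    rewrite (dm_zero_right m d F L) by (auto; lra). ring. }
  assert (E2 : RInt P (- (INR m * d)) M = RInt P (- (INR m * d)) (INR m * d) + RInt P (INR m * d) M).
  { pose proof (RInt_Chasles P (- (INR m * d)) (INR m * d) M (HPi _ _) (HPi _ _)) as C1'.
    unfold plus in C1'; simpl in C1'. lra. }
  assert (B1 : Rabs (RInt P (- (INR m * d)) (INR m * d)) <=
               2 * INR m * d * (2 ^ m * (C1 * Rpower (2 * INR m * d) e))).
  { replace (2 * INR m * d) with (INR m * d - - (INR m * d)) at 1 by ring.
    apply abs_RInt_le_const; [nra|auto|].
    intros u hu. unfold P. rewrite Rabs_mult.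
    pose proof (Hpb (t * u)). pose proof (Rabs_pos (dm m d F u)).
    assert (Rabs (dm m d F u) <= 2 ^ m * (C1 * Rpower (2 * INR m * d) e)).
    { apply dm_crude; [lra|]. intros v hv. destruct (Rle_or_lt v 0) as [h|h].
      - rewrite HF0, Rabs_R0 by auto. pose proof (Rpower_pos (2 * INR m * d) e). nra.
      - eapply Rle_trans; [apply HFb; auto|]. apply Rmult_le_compat_l; auto.
        apply Rle_Rpower_l; auto. lra. }
    nra. }
  assert (B2 : Rabs (RInt P (INR m * d) M) <=
     d ^ m * C2 * (Rpower U (g + 1) / (g + 1) + Rpower U g * U)).
  { apply part2; [nra|unfold U; lra|auto|pose proof (pow_le d m); nra|auto|].
    intros u hu. assert (hu0 : 0 < u) by nra.
    unfold P. rewrite (dm_ext m d F (Gs 0%nat) u) by (auto; lra || (intros; symmetry; apply HG0; lra)).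
    destruct (dm_mvt m Gs d u) as [xi [hxi Exi]]; try lra; auto.
    rewrite Exi, Rabs_mult, Rabs_mult, <- RPow_abs, Rabs_Ropp, (Rabs_pos_eq d) by lra.
    pose proof (Hpb (t * u)). pose proof (Rabs_pos (Gs m xi)).
    pose proof (pow_le d m ltac:(lra)).
    assert (Rabs (Gs m xi) <= C2 * (Rpower u g + Rpower U g)).
    { eapply Rle_trans; [apply HGb; lra|]. apply Rmult_le_compat_l; auto.
      pose proof (Rpower_pos u g). pose proof (Rpower_pos U g).
      destruct (Rle_or_lt 0 g).
      - assert (Rpower xi g <= Rpower U g) by (apply Rle_Rpower_l; auto; split; [lra|unfold U; nra]). lra.
      - assert (Rpower xi g <= Rpower u g) by (apply Rpower_neg_mono; lra). lra. }
    assert (Rabs (psi (t * u)) * (d ^ m * Rabs (Gs m xi)) <= d ^ m * Rabs (Gs m xi)).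
    { pose proof (Rabs_pos (psi (t * u))).
      assert (0 <= d ^ m * Rabs (Gs m xi)) by (apply Rmult_le_pos; auto). nra. }
    assert (d ^ m * Rabs (Gs m xi) <= d ^ m * (C2 * (Rpower u g + Rpower U g))) by nra.
    lra. }
  rewrite E1, E2. eapply Rle_trans; [apply Rabs_triang|]. fold U. lra.
Qed.


Lemma Sc_bound k b C g : Sc k b C g -> forall x, 0 < x -> Rabs (g x) <= C * Rpower x b.
Proof. destruct k; intros [H _]; auto. Qed.

Lemma shift_psi (psi : R -> R) t :
  t <> 0 -> (forall x, psi (x - PI) = - psi x) -> (forall x, psi (x + PI) = - psi x) ->
  forall w, psi (t * (w - PI / Rabs t)) = - psi (t * w).
Proof.
  intros ht H1 H2 w. destruct (Rle_or_lt 0 t) as [h|h].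
  - rewrite Rabs_pos_eq by lra. replace (t * (w - PI / t)) with (t * w - PI) by (field; lra). auto.
  - rewrite Rabs_left by lra. replace (t * (w - PI / - t)) with (t * w + PI) by (field; lra). auto.
Qed.

Lemma Rpower_split_pow d x m : 0 < d <= 1 -> INR m <= x -> Rpower d x <= d ^ m.
Proof.
  intros hd hx. replace x with (INR m + (x - INR m)) by ring.
  rewrite Rpower_plus, Rpower_pow by lra.
  pose proof (Rpower_le_1 d (x - INR m) hd ltac:(lra)). pose proof (pow_le d m ltac:(lra)). nra.
Qed.

Lemma delta_pow t m : t <> 0 -> (PI / Rabs t) ^ m = PI ^ m * Rpower (Rabs t) (- INR m).
Proof.
  intros ht. pose proof (Rabs_pos_lt t ht).
  rewrite Rpower_Ropp, Rpower_pow by auto. unfold Rdiv. rewrite Rpow_mult_distr, pow_inv. auto.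
Qed.

Lemma real_main m al Lam K : (2 <= m)%nat -> 2 * INR m - 1 < al -> 0 < Lam -> 0 <= K ->
  exists Cr, 0 < Cr /\
  forall lam1 (phi psi : R -> R), 0 < lam1 -> lam1 <= Lam ->
  (forall x, 0 < x -> lam1 < x -> phi x = 0) -> Sc m al K phi ->
  (forall x, continuous psi x) -> (forall x, psi (x - PI) = - psi x) ->
  (forall x, psi (x + PI) = - psi x) -> (forall x, Rabs (psi x) <= 1) ->
  forall t, t <> 0 ->
  ex_RInt (fun x => psi (t * x ^ 2) * phi x) 0 lam1 /\
  Rabs (RInt (fun x => psi (t * x ^ 2) * phi x) 0 lam1) <= Cr * Rpower (Rabs t) (- INR m).
Proof.
  intros hm hal hLam hK.
  assert (hmr : 2 <= INR m) by (apply (le_INR 2); auto).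
  set (e := (al - 1) / 2).
  set (g := e - INR m).
  set (Ch := A m * K).
  set (Bc := B m * Ch).
  set (U0 := Lam ^ 2).
  set (U := U0 + 2 * INR m).
  set (Q := Rpower U (g + 1) / (g + 1) + Rpower U g * U).
  set (S0 := U0 * (Ch * Rpower U0 e)).
  set (S1 := Ch * Rpower (2 * INR m) (e + 1) + Bc * Q).
  assert (hA : 1 <= A m) by apply A_ge1.
  assert (hB : 0 <= B m).
  { clear. induction m; simpl; [lra|]. pose proof (A_ge1 m). nra. }
  assert (hCh : 0 <= Ch) by (unfold Ch; nra).
  assert (hBc : 0 <= Bc) by (unfold Bc; nra).
  assert (he : 1 <= e) by (unfold e; lra).
  assert (hg : -1 < g) by (unfold g, e; lra).
  assert (hU0 : 0 < U0) by (unfold U0; nra).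
  assert (hQ : 0 <= Q).
  { unfold Q. pose proof (Rpower_pos U (g + 1)). pose proof (Rpower_pos U g).
    assert (0 < / (g + 1)) by (apply Rinv_0_lt_compat; lra).
    assert (0 < U) by (unfold U; lra).
    unfold Rdiv. apply Rplus_le_le_0_compat; apply Rmult_le_pos; lra. }
  assert (hS0 : 0 <= S0).
  { unfold S0; pose proof (Rpower_pos U0 e). apply Rmult_le_pos; [lra|]. apply Rmult_le_pos; lra. }
  assert (hS1 : 0 <= S1).
  { unfold S1; pose proof (Rpower_pos (2 * INR m) (e + 1)).
    apply Rplus_le_le_0_compat; apply Rmult_le_pos; lra. }
  assert (hPI : 0 < PI ^ m) by (apply pow_lt; apply PI_RGT_0).
  exists (S0 * PI ^ m + S1 * PI ^ m + 1). split; [nra|].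
  intros lam1 phi psi hl1 hl2 Hsupp HS Hpc Hp1 Hp2 Hpb t ht.
  set (h := fun x => / 2 * (phi x / x)).
  assert (Hh : Sc m (al - 1) Ch h).
  { pose proof (Sc_scal _ _ _ (/ 2) _ (Sc_inv _ _ _ _ HS)) as P.
    eapply Sc_mono; [|exact P]. rewrite Rabs_pos_eq by lra. unfold Ch. nra. }
  destruct (Sc_Dchain _ _ _ _ Hh) as [H [HH0 [HHd HHb]]].
  set (F := Fof (H 0%nat)).
  set (L := lam1 ^ 2).
  assert (hL : 0 < L <= U0) by (unfold L, U0; split; [apply pow_lt; lra|apply pow_incr; lra]).
  assert (HFb0 : forall v, 0 < v -> Rabs (H 0%nat (sqrt v)) <= Ch * Rpower v e).
  { intros v hv. pose proof (sqrt_lt_R0 v hv). rewrite HH0 by auto.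
    eapply Rle_trans; [apply (Sc_bound _ _ _ _ Hh); auto|]. rewrite Rpower_sqrt_e by auto.
    unfold e. lra. }
  assert (HH0c : forall y, 0 < y -> continuous (H 0%nat) y).
  { intros y hy. apply (ex_derive_continuous (K := R_AbsRing) (V := R_NormedModule)).
    eexists. apply HHd; auto. lia. }
  assert (HFc : forall v, continuous F v) by (apply (Fof_cont _ Ch e); auto).
  assert (HF0 : forall v, v <= 0 -> F v = 0).
  { intros v hv. unfold F, Fof. destruct (Rlt_dec 0 v); auto; lra. }
  assert (HFL : forall v, L < v -> F v = 0).
  { intros v hv. unfold F, Fof. destruct (Rlt_dec 0 v) as [h0|h0]; auto.
    assert (lam1 < sqrt v).
    { rewrite <- (sqrt_pow2 lam1) by lra. apply sqrt_lt_1; [nra|lra|]. exact hv. }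
    rewrite HH0 by lra. unfold h. rewrite Hsupp by lra. unfold Rdiv. ring. }
  assert (HFb : forall v, 0 < v -> Rabs (F v) <= Ch * Rpower v e).
  { intros v hv. unfold F, Fof. destruct (Rlt_dec 0 v); [auto|lra]. }
  set (Gs := fun j v => H j (sqrt v)).
  assert (HGd : forall j v, (j < m)%nat -> 0 < v -> is_derive (Gs j) v (Gs (S j) v)).
  { intros j v hj hv. unfold Gs. apply Gs_deriv; auto. apply HHd; auto. apply sqrt_lt_R0; auto. }
  assert (HG0 : forall v, 0 < v -> Gs 0%nat v = F v).
  { intros v hv. unfold Gs, F, Fof. destruct (Rlt_dec 0 v); auto; lra. }
  assert (HGb : forall v, 0 < v -> Rabs (Gs m v) <= Bc * Rpower v g).
  { intros v hv. unfold Gs. pose proof (sqrt_lt_R0 v hv). eapply Rle_trans; [apply HHb; auto|].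
    rewrite Rpower_sqrt_e by auto. unfold Bc, g, e.
    replace ((al - 1 - 2 * INR m) / 2) with ((al - 1) / 2 - INR m) by field. lra. }
  destruct (subst_lemma psi t (H 0%nat) phi lam1 hl1 Hpc HFc) as [Hex Heq].
  { intros x hx. rewrite HH0 by auto. reflexivity. }
  split; [exact Hex|]. rewrite Heq. fold F L.
  pose proof (Rabs_pos_lt t ht) as hat.
  assert (hRp : 0 < Rpower (Rabs t) (- INR m)) by apply Rpower_pos.
  destruct (Rlt_or_le (Rabs t) PI) as [hsmall|hlarge].
  -
    assert (B0 : Rabs (RInt (fun u => psi (t * u) * F u) 0 L) <= S0).
    { eapply Rle_trans.
      - apply abs_RInt_le_const with (M := Ch * Rpower U0 e); [lra|apply exRc; intros; apply cont_prod; auto; apply cont_comp_lin; auto|].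
        intros u hu. rewrite Rabs_mult. pose proof (Hpb (t * u)). pose proof (Rabs_pos (F u)).
        pose proof (Rpower_pos U0 e).
        assert (Rabs (F u) <= Ch * Rpower U0 e).
        { destruct (Rle_or_lt u 0) as [h0|h0].
          - rewrite HF0, Rabs_R0 by auto. nra.
          - eapply Rle_trans; [apply HFb; auto|]. apply Rmult_le_compat_l; auto.
            apply Rle_Rpower_l; lra. }
        pose proof (Rabs_pos (psi (t * u))). nra.
      - unfold S0. pose proof (Rpower_pos U0 e). apply Rmult_le_compat_r; [apply Rmult_le_pos|]; lra. }
    assert (1 <= PI ^ m * Rpower (Rabs t) (- INR m)).
    { rewrite Rpower_Ropp, Rpower_pow by auto.
      assert (Rabs t ^ m <= PI ^ m) by (apply pow_incr; lra).
      pose proof (pow_lt (Rabs t) m hat).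
      apply (Rmult_le_reg_r (Rabs t ^ m)); auto. rewrite Rmult_assoc, Rinv_l by lra. lra. }
    nra.
  -
    set (d := PI / Rabs t).
    assert (hd : 0 < d <= 1).
    { unfold d. split; [apply Rdiv_lt_0_compat; auto; apply PI_RGT_0|].
      apply (Rmult_le_reg_r (Rabs t)); auto. unfold Rdiv. rewrite Rmult_assoc, Rinv_l by lra. lra. }
    assert (Hsh : forall w, psi (t * (w - d)) = - psi (t * w)) by (apply shift_psi; auto).
    assert (E0 : RInt (fun u => psi (t * u) * F u) 0 L = RInt (fun u => psi (t * u) * F u) (- (INR m * d)) L).
    { assert (Hex2 : forall a b, ex_RInt (fun u => psi (t * u) * F u) a b).
      { intros; apply exRc; intros; apply cont_prod; auto; apply cont_comp_lin; auto. }
      pose proof (RInt_Chasles (fun u => psi (t * u) * F u) (- (INR m * d)) 0 L (Hex2 _ _) (Hex2 _ _)) as C1.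
      unfold plus in C1; simpl in C1.
      rewrite (RInt_zero_ext _ (- (INR m * d)) 0) in C1; [lra|].
      intros x hx. pose proof (pos_INR m). rewrite Rmin_left, Rmax_right in hx by nra. rewrite HF0 by lra. ring. }
    rewrite E0.
    rewrite (shiftm psi t d (- (INR m * d)) L L m) with (c := 0); auto; try lra.
    2:{ intros v hv. apply HF0; lra. }
    pose proof (bound_D psi F Gs t m d L U0 Ch Bc e g ltac:(lia) hd hL ltac:(lra) hg hCh hBc
                  Hpc Hpb HFc HF0 HFL HFb HGd HG0 HGb) as BD.
    fold U Q in BD.
    rewrite Rabs_mult, Rabs_pos_eq by (apply pow_le; lra).
    assert (hdm : 0 < d ^ m) by (apply pow_lt; lra).
    assert (T1 : 2 * INR m * d * (2 ^ m * (Ch * Rpower (2 * INR m * d) e)) =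
                 2 ^ m * (Ch * Rpower (2 * INR m) (e + 1) * Rpower d (e + 1))).
    { rewrite !Rpower_plus, !Rpower_1 by nra. rewrite <- (Rpower_mult_distr (2 * INR m) d e) by nra. ring. }
    assert (T1' : Rpower d (e + 1) <= d ^ m) by (apply Rpower_split_pow; unfold e; lra).
    assert (hI : (/ 2) ^ m * 2 ^ m = 1) by (rewrite <- Rpow_mult_distr, Rinv_l, pow1; lra).
    assert (hI2 : (/ 2) ^ m <= 1) by (rewrite <- (pow1 m); apply pow_incr; lra).
    assert (hI3 : 0 <= (/ 2) ^ m) by (apply pow_le; lra).
    set (R0 := Rabs (RInt (fun u => psi (t * u) * dm m d F u) (- (INR m * d)) L)) in *.
    rewrite T1 in BD.
    assert (step : (/ 2) ^ m * R0 <= S1 * d ^ m).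
    { apply Rle_trans with ((/ 2) ^ m * (2 ^ m * (Ch * Rpower (2 * INR m) (e + 1) * Rpower d (e + 1)) +
         d ^ m * Bc * Q)).
      { apply Rmult_le_compat_l; auto. }
      rewrite Rmult_plus_distr_l.
      replace ((/ 2) ^ m * (2 ^ m * (Ch * Rpower (2 * INR m) (e + 1) * Rpower d (e + 1)))) with
        (((/ 2) ^ m * 2 ^ m) * (Ch * Rpower (2 * INR m) (e + 1) * Rpower d (e + 1))) by ring.
      rewrite hI, Rmult_1_l. unfold S1.
      pose proof (Rpower_pos (2 * INR m) (e + 1)).
      assert (Ch * Rpower (2 * INR m) (e + 1) * Rpower d (e + 1) <= Ch * Rpower (2 * INR m) (e + 1) * d ^ m).
      { apply Rmult_le_compat_l; auto. apply Rmult_le_pos; lra. }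
      assert (0 <= d ^ m * Bc * Q) by (apply Rmult_le_pos; [apply Rmult_le_pos|]; lra).
      assert ((/ 2) ^ m * (d ^ m * Bc * Q) <= d ^ m * Bc * Q) by nra.
      nra. }
    unfold d in step. rewrite delta_pow in step by auto.
    assert (0 <= S0 * PI ^ m * Rpower (Rabs t) (- INR m)) by (apply Rmult_le_pos; [apply Rmult_le_pos|]; lra).
    nra.
Qed.


Lemma derive_fst (h : R -> C) x v :
  @is_derive R_AbsRing C_R_NormedModule h x v -> is_derive (fun y => fst (h y)) x (fst v).
Proof.
  intros H. unfold is_derive in *.
  pose proof (filterdiff_comp' (K := R_AbsRing) (U := R_NormedModule) (V := prod_NormedModule R_AbsRing R_NormedModule R_NormedModule) (W := R_NormedModule)
     h fst x _ fst H (filterdiff_linear _ is_linear_fst)) as P.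
  exact P.
Qed.

Lemma derive_snd (h : R -> C) x v :
  @is_derive R_AbsRing C_R_NormedModule h x v -> is_derive (fun y => snd (h y)) x (snd v).
Proof.
  intros H. unfold is_derive in *.
  pose proof (filterdiff_comp' (K := R_AbsRing) (U := R_NormedModule) (V := prod_NormedModule R_AbsRing R_NormedModule R_NormedModule) (W := R_NormedModule)
     h snd x _ snd H (filterdiff_linear _ is_linear_snd)) as P.
  exact P.
Qed.

Lemma tilde_Sc (pr : C -> R) m al K (g : nat -> R -> C) :
  (forall (h : R -> C) x v, @is_derive R_AbsRing C_R_NormedModule h x v -> is_derive (fun y => pr (h y)) x (pr v)) ->
  (forall z, Rabs (pr z) <= Cmod z) ->
  (forall (j : nat) lam, (j < m)%nat -> 0 < lam ->
       @is_derive R_AbsRing C_R_NormedModule (g j) lam (g (S j) lam)) ->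
  (forall (j : nat) lam, (j <= m)%nat -> 0 < lam ->
       Cmod (g j lam) <= K * Rpower lam (al - INR j)) ->
  forall k j, (j + k = m)%nat -> Sc k (al - INR j) K (fun x => pr (g j x)).
Proof.
  intros Hpr Hprb Hd Hb. induction k; intros j hjk; split.
  - intros x hx. eapply Rle_trans; [apply Hprb|]. apply Hb; auto. lia.
  - auto.
  - intros x hx. eapply Rle_trans; [apply Hprb|]. apply Hb; auto. lia.
  - exists (fun x => pr (g (S j) x)). split.
    + intros x hx. apply Hpr. apply Hd; auto. lia.
    + replace (al - INR j - 1) with (al - INR (S j)) by (rewrite S_INR; ring).
      apply IHk. lia.
Qed.

Lemma cos_props : (forall x, continuous cos x) /\ (forall x, cos (x - PI) = - cos x) /\
  (forall x, cos (x + PI) = - cos x) /\ (forall x, Rabs (cos x) <= 1).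
Proof.
  split; [|split; [|split]].
  - intros x. apply (ex_derive_continuous (K := R_AbsRing) (V := R_NormedModule)).
    exists (- sin x). apply is_derive_Reals. apply derivable_pt_lim_cos.
  - intros x. rewrite cos_minus, cos_PI, sin_PI. ring.
  - intros x. apply neg_cos.
  - intros x. pose proof (COS_bound x). apply Rabs_le. lra.
Qed.

Lemma sin_props : (forall x, continuous sin x) /\ (forall x, sin (x - PI) = - sin x) /\
  (forall x, sin (x + PI) = - sin x) /\ (forall x, Rabs (sin x) <= 1).
Proof.
  split; [|split; [|split]].
  - intros x. apply (ex_derive_continuous (K := R_AbsRing) (V := R_NormedModule)).
    exists (cos x). apply is_derive_Reals. apply derivable_pt_lim_sin.
  - intros x. rewrite sin_minus, cos_PI, sin_PI. ring.
  - intros x. apply neg_sin.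
  - intros x. pose proof (SIN_bound x). apply Rabs_le. lra.
Qed.

Lemma Cmod_le_sum (a b : R) : Cmod (a, b) <= 2 * (Rabs a + Rabs b).
Proof.
  eapply Rle_trans; [apply Cmod_2Rmax|]. simpl.
  assert (sqrt 2 <= 2) by (rewrite <- (sqrt_pow2 2) at 2 by lra; apply sqrt_le_1_alt; lra).
  assert (Rmax (Rabs a) (Rabs b) <= Rabs a + Rabs b).
  { pose proof (Rabs_pos a); pose proof (Rabs_pos b). apply Rmax_lub; lra. }
  pose proof (sqrt_pos 2). pose proof (Rabs_pos a); pose proof (Rabs_pos b).
  pose proof (Rmax_l (Rabs a) (Rabs b)). nra.
Qed.

Theorem lemma5p8 (n : nat) (alpha Lambda K : R) :
  Nat.Even n -> (6 <= n)%nat -> INR n - 3 < alpha -> 0 < Lambda ->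
  exists Cst : R, 0 < Cst /\
    forall (lam1 : R) (f : R -> C),
      0 < lam1 -> lam1 <= Lambda ->
      (forall lam, 0 < lam -> lam1 < lam -> f lam = 0) ->
      tildeO_hyp (n / 2 - 1) alpha K f ->
      forall t : R, t <> 0 ->
        Cmod (osc_int t lam1 f) <= Cst * Rpower (Rabs t) (1 - INR n / 2).
Proof.
  intros [k hk] h6 hal hL. subst n.
  assert (hdiv : (2 * k / 2 = k)%nat) by (rewrite Nat.mul_comm; apply Nat.div_mul; lia).
  rewrite hdiv. set (m := (k - 1)%nat).
  assert (hm : (2 <= m)%nat) by (unfold m; lia).
  assert (hkm : k = S m) by (unfold m; lia).
  assert (E1 : 1 - INR (2 * k) / 2 = - INR m)
    by (rewrite hkm, mult_INR, (S_INR m); replace (INR 2) with 2 by (simpl; lra); field).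
  assert (E2 : INR (2 * k) - 3 = 2 * INR m - 1) by (rewrite hkm, mult_INR, (S_INR m); replace (INR 2) with 2 by (simpl; lra); ring).
  rewrite E1. rewrite E2 in hal.
  destruct (Rlt_or_le K 0) as [hK|hK].
  - exists 1. split; [lra|]. intros lam1 f _ _ _ [g [_ [_ Hb]]].
    exfalso. specialize (Hb 0%nat 1 ltac:(lia) Rlt_0_1). pose proof (Cmod_ge_0 (g 0%nat 1)).
    pose proof (Rpower_pos 1 (alpha - INR 0)). nra.
  - destruct (real_main m alpha Lambda K hm hal hL hK) as [Cr [hCr HCr]].
    exists (8 * Cr). split; [lra|].
    intros lam1 f hl1 hl2 Hsupp [g [Hg0 [Hgd Hgb]]] t ht.
    assert (Hf : forall pr : C -> R,
      (forall (h : R -> C) x v, @is_derive R_AbsRing C_R_NormedModule h x v -> is_derive (fun y => pr (h y)) x (pr v)) ->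
      (forall z, Rabs (pr z) <= Cmod z) -> Sc m alpha K (fun x => pr (f x))).
    { intros pr H1 H2. pose proof (tilde_Sc pr m alpha K g H1 H2 Hgd Hgb m 0%nat ltac:(lia)) as P.
      replace (alpha - INR 0) with alpha in P by (simpl; ring).
      replace (fun x => pr (f x)) with (fun x => pr (g 0%nat x)); auto.
      apply functional_extensionality; intros; rewrite Hg0; auto. }
    assert (S1 : Sc m alpha K (fun x => fst (f x))).
    { apply Hf; [apply derive_fst|]. intros z. destruct z as [a b]. apply (Rmax_Cmod (a, b)) || idtac.
      pose proof (Rmax_Cmod (a, b)). simpl in *. pose proof (Rmax_l (Rabs a) (Rabs b)). lra. }
    assert (S2 : Sc m alpha K (fun x => snd (f x))).
    { apply Hf; [apply derive_snd|]. intros z. destruct z as [a b].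
      pose proof (Rmax_Cmod (a, b)). simpl in *. pose proof (Rmax_r (Rabs a) (Rabs b)). lra. }
    assert (Hs1 : forall x, 0 < x -> lam1 < x -> fst (f x) = 0) by (intros; rewrite Hsupp; auto).
    assert (Hs2 : forall x, 0 < x -> lam1 < x -> snd (f x) = 0) by (intros; rewrite Hsupp; auto).
    destruct cos_props as [c1 [c2 [c3 c4]]]. destruct sin_props as [s1 [s2 [s3 s4]]].
    destruct (HCr lam1 _ cos hl1 hl2 Hs1 S1 c1 c2 c3 c4 t ht) as [X1 Y1].
    destruct (HCr lam1 _ sin hl1 hl2 Hs2 S2 s1 s2 s3 s4 t ht) as [X2 Y2].
    destruct (HCr lam1 _ cos hl1 hl2 Hs2 S2 c1 c2 c3 c4 t ht) as [X3 Y3].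
    destruct (HCr lam1 _ sin hl1 hl2 Hs1 S1 s1 s2 s3 s4 t ht) as [X4 Y4].
    set (J1 := RInt (fun x => cos (t * x ^ 2) * fst (f x)) 0 lam1) in *.
    set (J2 := RInt (fun x => sin (t * x ^ 2) * snd (f x)) 0 lam1) in *.
    set (J3 := RInt (fun x => cos (t * x ^ 2) * snd (f x)) 0 lam1) in *.
    set (J4 := RInt (fun x => sin (t * x ^ 2) * fst (f x)) 0 lam1) in *.
    assert (HI : osc_int t lam1 f = (J1 - J2, J3 + J4)).
    { unfold osc_int. apply (is_RInt_unique (V := C_R_CompleteNormedModule)).
      apply (is_RInt_fct_extend_pair (U := R_NormedModule) (V := R_NormedModule)).
      - apply (is_RInt_ext (fun x => minus (cos (t * x ^ 2) * fst (f x)) (sin (t * x ^ 2) * snd (f x)))).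
        + intros x _. unfold eix, Cmult, minus, plus, opp; simpl. ring.
        + apply (is_RInt_minus (V := R_NormedModule)); apply (RInt_correct (V := R_CompleteNormedModule)); auto.
      - apply (is_RInt_ext (fun x => plus (cos (t * x ^ 2) * snd (f x)) (sin (t * x ^ 2) * fst (f x)))).
        + intros x _. unfold eix, Cmult, plus; simpl. ring.
        + apply (is_RInt_plus (V := R_NormedModule)); apply (RInt_correct (V := R_CompleteNormedModule)); auto. }
    rewrite HI. eapply Rle_trans; [apply Cmod_le_sum|].
    pose proof (Rabs_triang J1 (- J2)). rewrite Rabs_Ropp in H.
    pose proof (Rabs_triang J3 J4). unfold Rminus.
    lra.
Qed.
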